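(* For $d\ge3$, the maximal number of pairwise disjoint lines in $\mathcal{L}^0\cup\mathcal{L}^s$ is $2d$ for $s=1,2$, and the maximal number of pairwise disjoint lines in $\mathcal{L}^1\cup\mathcal{L}^2$ is $2d$. Consequently the maximal number $\mathfrak{s}({\rm F}_d)$ of pairwise disjoint lines on ${\rm F}_d$ satisfies $2d\le\mathfrak{s}({\rm F}_d)\le 3d$.
   Context: ${\rm F}_d\subset\mathbb{P}^3(\mathbb{C})$ is the surface $x^d-y^d-z^d+w^d=0$. Fix a primitive $d$-th root of unity $\eta$ and $v\in\mathbb{C}$ with $v^d=-1$. For $k,i\in\{0,\dots,d-1\}$ define $L^0_{k,i}:\{y=\eta^i x,\ w=\eta^k z\}$, $L^1_{k,i}:\{x=\eta^{k+i}z,\ y=\eta^i w\}$, $L^2_{k,i}:\{x=v\eta^i w,\ y=v\eta^{k+i}z\}$, and $\mathcal{L}^s=\{L^s_{k,i}\}_{k,i}$; these are all the lines on ${\rm F}_d$. *)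

(* Defs.v *)
(* The ground field C is taken as R[i] = complex R for
   R : realType (MathComp-Analysis reals, which are real closed), i.e. C. *)
From mathcomp Require Import all_boot all_order all_algebra.
From mathcomp Require Import complex.
From mathcomp Require Import reals.
Set Implicit Arguments. Unset Strict Implicit. Unset Printing Implicit Defensive.
Import Order.TTheory GRing.Theory Num.Theory.
Local Open Scope ring_scope.

(* Index of a line L^s_{k,i}: (s, k, i) with s in {0,1,2}, k,i in {0..d-1}. *)
Definition line_idx (d : nat) := ('I_3 * 'I_d * 'I_d)%type.

(* The homogeneous point [x:y:z:w] lies on the line L^s_{k,i}
   (eta a primitive d-th root of unity, v with v^d = -1). *)
Definition on_line (C : ringType) (eta v : C) (s k i : nat) (x y z w : C) : Prop :=
  match s with
  | 0 => y = eta ^+ i * x /\ w = eta ^+ k * z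
  | 1 => x = eta ^+ (k + i) * z /\ y = eta ^+ i * w
  | _ => x = v * eta ^+ i * w /\ y = v * eta ^+ (k + i) * z
  end.

Definition on_line_idx (C : ringType) (eta v : C) d (a : line_idx d) x y z w :=
  on_line eta v (val a.1.1) (val a.1.2) (val a.2) x y z w.

Definition lines_meet (C : ringType) (eta v : C) d (a b : line_idx d) : Prop :=
  exists x y z w : C, ~ (x = 0 /\ y = 0 /\ z = 0 /\ w = 0) /\
    on_line_idx eta v a x y z w /\ on_line_idx eta v b x y z w.

Definition pairwise_disjoint (C : ringType) (eta v : C) d (S : {set line_idx d}) : Prop :=
  forall a b, a \in S -> b \in S -> a <> b -> ~ lines_meet eta v a b.

Definition in_families d (fs : seq nat) (S : {set line_idx d}) : Prop :=
  forall a, a \in S -> val a.1.1 \in fs.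

Definition max_disjoint_is (C : ringType) (eta v : C) d (fs : seq nat) (n : nat) : Prop :=
  (exists S : {set line_idx d}, [/\ in_families fs S, pairwise_disjoint eta v S & #|S| = n]) /\
  (forall S : {set line_idx d}, in_families fs S -> pairwise_disjoint eta v S -> #|S| <= n)%N.

(* Main.v *)
Require Import Defs.
From mathcomp Require Import all_boot all_order all_algebra.
From mathcomp Require Import complex.
From mathcomp Require Import reals.
From mathcomp Require Import ring zify.
Import Order.TTheory GRing.Theory Num.Theory.
Local Open Scope ring_scope.
Set Implicit Arguments. Unset Strict Implicit.

Lemma same_meet (F : fieldType) (e v : F) d (a b : line_idx d) :
  a.1.1 = b.1.1 -> a.2 = b.2 -> lines_meet e v a b.
Proof.
case: a => [[s k] i]; case: b => [[s' k'] i'] /= <- <-.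
rewrite /lines_meet /on_line_idx /=.
case: s => [[|[|[|n]]] Hs] //=.
- exists 1, (e ^+ i), 0, 0; split; first by case => /eqP; rewrite oner_eq0.
  by rewrite !mulr0 mulr1.
- exists 0, (e ^+ i), 0, 1; split; first by case => _ [_ [_ /eqP]]; rewrite oner_eq0.
  by rewrite !mulr0 mulr1.
- exists (v * e ^+ i), 0, 0, 1; split; first by case => _ [_ [_ /eqP]]; rewrite oner_eq0.
  by rewrite !mulr0 mulr1.
Qed.

Lemma meet_sym (F : fieldType) (e v : F) d (a b : line_idx d) :
  lines_meet e v a b -> lines_meet e v b a.
Proof. by case=> x [y [z [w [H [H1 H2]]]]]; exists x, y, z, w. Qed.

Lemma inj_si (F : fieldType) (e v : F) d (S : {set line_idx d}) :
  pairwise_disjoint e v S -> {in S &, injective (fun a : line_idx d => (a.1.1, a.2))}.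
Proof.
move=> H a b Ha Hb [E1 E2]; case: (eqVneq a b) => // /eqP Hne.
by exfalso; apply: (H a b Ha Hb Hne); apply: same_meet.
Qed.

Lemma ub3 (F : fieldType) (e v : F) d (S : {set line_idx d}) :
  pairwise_disjoint e v S -> (#|S| <= 3 * d)%N.
Proof.
move=> H; rewrite -(card_in_imset (inj_si H)).
by apply: leq_trans (max_card _) _; rewrite card_prod !card_ord.
Qed.

Lemma aux (s1 s2 p q : nat) : s1 != s2 -> p \in [:: s1; s2] -> q \in [:: s1; s2] ->
  (p == s2) = (q == s2) -> p = q.
Proof.
move=> ns; rewrite !inE.
case/orP => /eqP ->; case/orP => /eqP -> //=; rewrite ?eqxx; try by [].
  by move/eqP.
by move/esym/eqP ->.
Qed.

Lemma ub2 (F : fieldType) (e v : F) d (s1 s2 : nat) (S : {set line_idx d}) :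
  s1 != s2 -> in_families [:: s1; s2] S ->
  pairwise_disjoint e v S -> (#|S| <= 2 * d)%N.
Proof.
move=> ns HS H.
have inj : {in S &, injective (fun a : line_idx d => (val a.1.1 == s2, a.2))}.
  move=> a b Ha Hb [E1 E2]; apply: (inj_si H Ha Hb); congr (_, _) => //.
  apply: val_inj; apply: (aux ns (HS a Ha) (HS b Hb) E1).
rewrite -(card_in_imset inj).
by apply: leq_trans (max_card _) _; rewrite card_prod card_bool !card_ord.
Qed.

Lemma constr (F : fieldType) (e v : F) d (g0 g1 : 'I_d -> line_idx d) (s1 s2 : nat) :
  s1 != s2 -> (forall j, val (g0 j).1.1 = s1) -> (forall j, val (g1 j).1.1 = s2) ->
  (forall j j', j != j' -> ~ lines_meet e v (g0 j) (g0 j')) ->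
  (forall j j', j != j' -> ~ lines_meet e v (g1 j) (g1 j')) ->
  (forall j j', ~ lines_meet e v (g0 j) (g1 j')) ->
  max_disjoint_is e v d [:: s1; s2] (2 * d) /\
  exists S : {set line_idx d}, pairwise_disjoint e v S /\ (2 * d <= #|S|)%N.
Proof.
move=> ns G0 G1 D0 D1 D01.
pose h (x : bool * 'I_d) := if x.1 then g1 x.2 else g0 x.2.
pose S := [set h x | x : bool * 'I_d].
have hinj : injective h.
  case=> [b j] [b' j']; rewrite /h /=.
  case: b; case: b' => E.
  - case: (eqVneq j j') => [->|Hn] //; exfalso; apply: (D1 _ _ Hn).
    by rewrite E; apply: same_meet.
  - by move: (G1 j) (G0 j') ns; rewrite E => -> ->; rewrite eqxx.
  - by move: (G0 j) (G1 j') ns; rewrite E => -> ->; rewrite eqxx.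
  - case: (eqVneq j j') => [->|Hn] //; exfalso; apply: (D0 _ _ Hn).
    by rewrite E; apply: same_meet.
have cS : #|S| = (2 * d)%N by rewrite card_imset // card_prod card_bool card_ord.
have pS : pairwise_disjoint e v S.
  move=> a b /imsetP [[x j] _ ->] /imsetP [[y j'] _ ->] Hne.
  have Hj : x = y -> j != j'.
    by move=> Exy; apply/eqP => Ejj; apply: Hne; rewrite Exy Ejj.
  clear Hne.
  rewrite /h /=; case: x Hj; case: y => /= Hj.
  - exact: D1 (Hj erefl).
  - by move/meet_sym; apply: D01.
  - by apply: D01.
  - exact: D0 (Hj erefl).
split; last by exists S; rewrite cS.
split; last by move=> T HT PT; apply: ub2 ns HT PT.
exists S; split => //.
move=> a /imsetP [[x j] _ ->]; rewrite /h /=; case: x => /=.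
  by rewrite G1 !inE eqxx orbT.
by rewrite G0 !inE eqxx.
Qed.
Definition nz {F : fieldType} (x y z w : F) := ~ (x = 0 /\ y = 0 /\ z = 0 /\ w = 0).

Lemma nc00 (F : fieldType) (e v : F) k i k' i' {x y z w} : ~ (x = 0 /\ y = 0 /\ z = 0 /\ w = 0) ->
  on_line e v 0 k i x y z w -> on_line e v 0 k' i' x y z w ->
  e ^+ i = e ^+ i' \/ e ^+ k = e ^+ k'.
Proof.
move=> H [y1 w1] [y2 w2]; have [x0|x0] := eqVneq x 0.
  right; have [z0|z0] := eqVneq z 0.
    by exfalso; apply: H; rewrite w1 y1 x0 z0 !mulr0.
  by apply: (mulIf z0); rewrite -w1 -w2.
by left; apply: (mulIf x0); rewrite -y1 -y2.
Qed.

Lemma nc11 (F : fieldType) (e v : F) k i k' i' {x y z w} : ~ (x = 0 /\ y = 0 /\ z = 0 /\ w = 0) ->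
  on_line e v 1 k i x y z w -> on_line e v 1 k' i' x y z w ->
  e ^+ (k + i) = e ^+ (k' + i') \/ e ^+ i = e ^+ i'.
Proof.
move=> H [y1 w1] [y2 w2]; have [z0|z0] := eqVneq z 0.
  right; have [x0|x0] := eqVneq w 0.
    by exfalso; apply: H; rewrite w1 y1 x0 z0 !mulr0.
  by apply: (mulIf x0); rewrite -w1 -w2.
by left; apply: (mulIf z0); rewrite -y1 -y2.
Qed.

Lemma nc22 (F : fieldType) (e v : F) k i k' i' {x y z w} : v != 0 -> ~ (x = 0 /\ y = 0 /\ z = 0 /\ w = 0) ->
  on_line e v 2 k i x y z w -> on_line e v 2 k' i' x y z w ->
  e ^+ (k + i) = e ^+ (k' + i') \/ e ^+ i = e ^+ i'.
Proof.
move=> v0 H [y1 w1] [y2 w2]; have [z0|z0] := eqVneq w 0.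
  left; have [x0|x0] := eqVneq z 0.
    by exfalso; apply: H; rewrite w1 y1 x0 z0 !mulr0.
  by apply: (mulfI v0); apply: (mulIf x0); rewrite -w1 -w2.
by right; apply: (mulfI v0); apply: (mulIf z0); rewrite -y1 -y2.
Qed.

Lemma nc01 (F : fieldType) (e v : F) k i k' i' {x y z w} : e != 0 -> ~ (x = 0 /\ y = 0 /\ z = 0 /\ w = 0) ->
  on_line e v 0 k i x y z w -> on_line e v 1 k' i' x y z w ->
  e ^+ (i + k') = e ^+ k.
Proof.
move=> e0 H [y1 w1] [y2 w2]; have [z0|z0] := eqVneq z 0.
  by exfalso; apply: H; rewrite y1 w1 y2 z0 !mulr0.
apply: (mulIf z0); apply: (mulIf (expf_neq0 i' e0)).
have : e ^+ i * (e ^+ (k' + i') * z) = e ^+ i' * (e ^+ k * z) by rewrite -y2 -w1 -y1.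
rewrite !exprD => E.
transitivity (e ^+ i * (e ^+ k' * e ^+ i' * z)); first by ring.
by rewrite E; ring.
Qed.

Lemma nc02 (F : fieldType) (e v : F) k i k' i' {x y z w} : e != 0 -> v != 0 -> ~ (x = 0 /\ y = 0 /\ z = 0 /\ w = 0) ->
  on_line e v 0 k i x y z w -> on_line e v 2 k' i' x y z w ->
  e ^+ (i + k) = e ^+ k'.
Proof.
move=> e0 v0 H [y1 w1] [y2 w2]; have [z0|z0] := eqVneq z 0.
  by exfalso; apply: H; rewrite y1 y2 w1 z0 !mulr0.
apply: (mulIf z0); apply: (mulIf (expf_neq0 i' e0)); apply: (mulIf v0).
have : e ^+ i * (v * e ^+ i' * (e ^+ k * z)) = v * e ^+ (k' + i') * z by rewrite -w1 -y2 -y1.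
rewrite !exprD => E.
transitivity (e ^+ i * (v * e ^+ i' * (e ^+ k * z))); first by ring.
by rewrite E; ring.
Qed.

Lemma nc12 (F : fieldType) (e v : F) k i k' i' {x y z w} : e != 0 -> v != 0 -> ~ (x = 0 /\ y = 0 /\ z = 0 /\ w = 0) ->
  on_line e v 1 k i x y z w -> on_line e v 2 k' i' x y z w ->
  e ^+ (k + i + i) = v ^+ 2 * e ^+ (k' + i' + i').
Proof.
move=> e0 v0 H [y1 w1] [y2 w2]; have [z0|z0] := eqVneq z 0.
  exfalso; apply: H; have x0 : x = 0 by rewrite y1 z0 mulr0.
  have ww : w = 0.
    by move: y2; rewrite x0 => /esym/eqP; rewrite !mulf_eq0 (negPf v0) (negPf (expf_neq0 _ e0)) /= => /eqP.
  by rewrite w1 ww x0 z0 mulr0.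
apply: (mulIf z0).
have E1 : e ^+ (k + i) * z = v * e ^+ i' * w by rewrite -y1 -y2.
have E2 : e ^+ i * w = v * e ^+ (k' + i') * z by rewrite -w1 -w2.
transitivity (e ^+ i * (e ^+ (k + i) * z)); first by rewrite !exprD; ring.
rewrite E1.
transitivity (v * e ^+ i' * (e ^+ i * w)); first by ring.
by rewrite E2 !exprD; ring.
Qed.

Lemma einj (F : fieldType) (e : F) d a b : d.-primitive_root e -> (a < d)%N -> (b < d)%N ->
  e ^+ a = e ^+ b -> a = b.
Proof.
by move=> pe ha hb /eqP; rewrite (eq_prim_root_expr pe) !modn_small // => /eqP.
Qed.

Lemma einjo (F : fieldType) (e : F) d (j j' : 'I_d) : d.-primitive_root e ->
  e ^+ j = e ^+ j' -> j = j'.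
Proof. by move=> pe /(einj pe (ltn_ord _) (ltn_ord _)) /val_inj. Qed.

Lemma e_neq0 (F : fieldType) (e : F) d : d.-primitive_root e -> (0 < d)%N -> e != 0.
Proof.
move=> pe d0; apply/eqP => E; move: (prim_expr_order pe); rewrite E expr0n.
by case: d d0 {pe} => //= n _ /eqP; rewrite eq_sym oner_eq0.
Qed.

Ltac getpts := let x := fresh "x" in let y := fresh "y" in let z := fresh "z" in
  let w := fresh "w" in let Hz := fresh "Hz" in let H1 := fresh "H1" in let H2 := fresh "H2" in
  case=> x [y [z [w [Hz [H1 H2]]]]].

Lemma inst01 (F : fieldType) (e v : F) d : d.-primitive_root e -> (2 < d)%N ->
  max_disjoint_is e v d [:: 0%N; 1%N] (2 * d) /\
  exists S : {set line_idx d}, pairwise_disjoint e v S /\ (2 * d <= #|S|)%N.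
Proof.
move=> pe d3; have d1 : (1 < d)%N by lia.
have e0 := e_neq0 pe (ltnW d1).
apply: (@constr F e v d (fun j => (Ordinal (isT : (0 < 3)%N), j, j))
   (fun j => (Ordinal (isT : (1 < 3)%N), Ordinal d1, j))) => //.
- move=> j j' Hn; getpts.
  by case: (nc00 (v:=v) Hz H1 H2) => /(einjo pe) /= E; rewrite E eqxx in Hn.
- move=> j j' Hn; getpts.
  case: (nc11 (v:=v) Hz H1 H2) => E.
    move: E; rewrite !exprD => /(mulfI (expf_neq0 1 e0)) E; move: E.
    by move=> /(einjo pe) /= E; rewrite E eqxx in Hn.
  by move: E => /(einjo pe) /= E; rewrite E eqxx in Hn.
- move=> j j'; getpts.
  move: (nc01 (v:=v) e0 Hz H1 H2); rewrite exprD -{2}(mulr1 (e ^+ j)) => /(mulfI (expf_neq0 j e0)).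
  by rewrite -(expr0 e) => /(einj pe d1 (ltnW d1)).
Qed.

Lemma inst02 (F : fieldType) (e v : F) d : d.-primitive_root e -> (2 < d)%N -> v != 0 ->
  max_disjoint_is e v d [:: 0%N; 2%N] (2 * d) /\
  exists S : {set line_idx d}, pairwise_disjoint e v S /\ (2 * d <= #|S|)%N.
Proof.
move=> pe d3 v0; have d0 : (0 < d)%N by lia.
have e0 := e_neq0 pe d0.
apply: (@constr F e v d (fun j => (Ordinal (isT : (0 < 3)%N), rev_ord j, j))
   (fun j => (Ordinal (isT : (2 < 3)%N), Ordinal d0, j))) => //.
- move=> j j' Hn; getpts.
  case: (nc00 (v:=v) Hz H1 H2) => /(einjo pe) /= E.
    by rewrite E eqxx in Hn.
  by move/rev_ord_inj: E => E; rewrite E eqxx in Hn.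
- move=> j j' Hn; getpts.
  by case: (nc22 v0 Hz H1 H2) => /(einjo pe) /= E; rewrite E eqxx in Hn.
- move=> j j'; getpts.
  move: (nc02 e0 v0 Hz H1 H2) => /= E.
  have hj := ltn_ord j.
  have := einj pe _ d0 E; lia.
Qed.

Lemma inst12 (F : fieldType) (e v : F) d (m : nat) : d.-primitive_root e -> (2 < d)%N -> v != 0 ->
  (m < d)%N -> v ^+ 2 = e ^+ m ->
  max_disjoint_is e v d [:: 1%N; 2%N] (2 * d) /\
  exists S : {set line_idx d}, pairwise_disjoint e v S /\ (2 * d <= #|S|)%N.
Proof.
move=> pe d3 v0 md Hm; have d0 : (0 < d)%N by lia.
have e0 := e_neq0 pe d0.
pose c := (d + 1 - m)%N.
have A : forall j : 'I_d, e ^+ ((2 * j) %% d + (d - j.+1)) = e ^+ j * e ^+ d.-1.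
  move=> j; rewrite exprD prim_expr_mod // -!exprD; congr (_ ^+ _).
  have := ltn_ord j; lia.
have B : forall j : 'I_d, e ^+ ((2 * j + c) %% d + (d - j.+1)) = e ^+ j * e ^+ (c + d.-1).
  move=> j; rewrite exprD prim_expr_mod // -!exprD; congr (_ ^+ _).
  have := ltn_ord j; lia.
have C : forall j : 'I_d, e ^+ ((2 * j) %% d + (d - j.+1) + (d - j.+1)) = e ^+ (2 * d.-1).
  move=> j; rewrite -addnA exprD prim_expr_mod // -!exprD; congr (_ ^+ _).
  have := ltn_ord j; lia.
have D : forall j : 'I_d, e ^+ ((2 * j + c) %% d + (d - j.+1) + (d - j.+1)) = e ^+ (c + 2 * d.-1).
  move=> j; rewrite -addnA exprD prim_expr_mod // -!exprD; congr (_ ^+ _).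
  have := ltn_ord j; lia.
apply: (@constr F e v d (fun j => (Ordinal (isT : (1 < 3)%N), Ordinal (ltn_pmod (2 * j) d0), rev_ord j))
   (fun j => (Ordinal (isT : (2 < 3)%N), Ordinal (ltn_pmod (2 * j + c) d0), rev_ord j))) => //.
- move=> j j' Hn; getpts.
  case: (nc11 (v:=v) Hz H1 H2) => /= E.
    move: E; rewrite !A => /(mulIf (expf_neq0 _ e0)) /(einjo pe) E.
    by rewrite E eqxx in Hn.
  move: (einjo pe (j:=rev_ord j) (j':=rev_ord j') E) => /rev_ord_inj E'.
  by rewrite E' eqxx in Hn.
- move=> j j' Hn; getpts.
  case: (nc22 v0 Hz H1 H2) => /= E.
    move: E; rewrite !B => /(mulIf (expf_neq0 _ e0)) /(einjo pe) E.
    by rewrite E eqxx in Hn.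
  move: (einjo pe (j:=rev_ord j) (j':=rev_ord j') E) => /rev_ord_inj E'.
  by rewrite E' eqxx in Hn.
- move=> j j'; getpts.
  move: (nc12 e0 v0 Hz H1 H2) => /=; rewrite C D Hm -exprD => E.
  have : e ^+ (0 + 2 * d.-1) = e ^+ (1 + 2 * d.-1).
    rewrite add0n E.
    have -> : (m + (c + 2 * d.-1) = d + (1 + 2 * d.-1))%N by lia.
    by rewrite exprD prim_expr_order // mul1r.
  move/eqP; rewrite (eq_prim_root_expr pe) eqn_modDr !modn_small //; lia.
Qed.

Unset Implicit Arguments.

Theorem corollary2p3 (R : realType) (d : nat) (eta v : R[i]) :
  (3 <= d)%N -> d.-primitive_root eta -> v ^+ d = -1 ->
  [/\ max_disjoint_is eta v d [:: 0%N; 1%N] (2 * d),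
      max_disjoint_is eta v d [:: 0%N; 2%N] (2 * d),
      max_disjoint_is eta v d [:: 1%N; 2%N] (2 * d),
      (exists S : {set line_idx d}, pairwise_disjoint eta v S /\ (2 * d <= #|S|)%N)
    & (forall S : {set line_idx d}, pairwise_disjoint eta v S -> (#|S| <= 3 * d)%N)].
Proof.
move=> d3 pe hv.
have v0 : v != 0.
  apply/eqP => v0; move: hv; rewrite v0 expr0n.
  case: d d3 {pe} => //= n _ /eqP; rewrite eq_sym oppr_eq0 oner_eq0.
  by [].
have hv2 : (v ^+ 2) ^+ d = 1.
  by rewrite -exprM mulnC exprM hv sqrrN expr1n.
have [m Hm] := prim_rootP pe hv2.
have [I01 E01] := inst01 v pe d3.
have [I02 _] := inst02 pe d3 v0.
have [I12 _] := inst12 pe d3 v0 (ltn_ord m) Hm.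
split => //.
by move=> S; apply: ub3.
Qed.
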